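(* Let $X$ be a real or complex Banach space, $(A(n))_{n\in\mathbb{N}}$ a sequence in $\mathcal{B}(X)$, and $P:\mathbb{N}\to\mathcal{B}(X)$ a family of projections compatible with the system $x_{n+1}=A(n)x_n$, with complementary family $Q(n)=I-P(n)$. Then the system is $P$-uniformly exponentially dichotomic if and only if there exist constants $D,d>0$ such that \[ \sum_{j=m}^{\infty}e^{d(j-m)}\|\mathcal{A}_P(j,n)x\|+\sum_{k=n}^{m}e^{d(m-k)}\|\mathcal{A}_Q(k,n)x\|\le D\big(\|\mathcal{A}_P(m,n)x\|+\|\mathcal{A}_Q(m,n)x\|\big) \] for all $(m,n)\in\Delta$ and all $x\in X$.
   Context: $\mathbb{N}$ denotes the set of positive integers; $\mathcal{B}(X)$ is the Banach algebra of bounded linear operators on $X$, and $I$ is the identity operator. $\Delta=\{(m,n)\in\mathbb{N}^2: m\ge n\}$. A family of projections is a map $P:\mathbb{N}\to\mathcal{B}(X)$ with $P(n)^2=P(n)$ for all $n$; its complementary family is $Q(n)=I-P(n)$. $P$ is compatible with the system $x_{n+1}=A(n)x_n$ if $A(n+1)P(n)=P(n+1)A(n+1)$ for all $n\in\mathbb{N}$. For $(m,n)\in\Delta$ define $\mathcal{A}_P(m,n)=A(m)\cdots A(n+1)P(n)$ if $m>n$ and $\mathcal{A}_P(n,n)=P(n)$; similarly $\mathcal{A}_Q(m,n)=A(m)\cdots A(n+1)Q(n)$ if $m>n$ and $\mathcal{A}_Q(n,n)=Q(n)$. The system is $P$-uniformly exponentially dichotomic if there exist constants $N\ge1$ and $\alpha>0$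 such that $e^{\alpha(m-n)}\big(\|\mathcal{A}_P(m,n)x\|+\|Q(n)x\|\big)\le N\big(\|P(n)x\|+\|\mathcal{A}_Q(m,n)x\|\big)$ for all $(m,n)\in\Delta$, $x\in X$. *)

(* Defs.v *)
From HB Require Import structures.
From mathcomp Require Import all_boot all_order all_algebra.
From mathcomp Require Import all_classical all_reals all_analysis.
Set Implicit Arguments. Unset Strict Implicit. Unset Printing Implicit Defensive.
Import Order.TTheory GRing.Theory Num.Theory.
Import numFieldNormedType.Exports.
Local Open Scope ring_scope.

Section Defs.
Context {R : realType} {X : normedModType R}.

(* evolution operator: evol A m n = A(m) o ... o A(n+1) for m > n, identity if m <= n *)
Fixpoint evol (A : nat -> X -> X) (m n : nat) : X -> X :=
  match m with
  | 0 => id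
  | m'.+1 => if (n <= m')%N then (A m'.+1) \o (evol A m' n) else id
  end.

Definition compl (P : nat -> X -> X) (n : nat) : X -> X := fun x => x - P n x.

Definition evolP (A P : nat -> X -> X) (m n : nat) : X -> X :=
  fun x => evol A m n (P n x).

Definition evolQ (A P : nat -> X -> X) (m n : nat) : X -> X :=
  fun x => evol A m n (compl P n x).

Definition compatible (A P : nat -> X -> X) : Prop :=
  forall n : nat, (1 <= n)%N -> forall x, A n.+1 (P n x) = P n.+1 (A n.+1 x).

Definition P_ued (A P : nat -> X -> X) : Prop :=
  exists (N alpha : R), 1 <= N /\ 0 < alpha /\
    forall m n : nat, (1 <= n)%N -> (n <= m)%N -> forall x : X,
      expR (alpha * (m - n)%:R) * (`|evolP A P m n x| + `|compl P n x|)
      <= N * (`|P n x| + `|evolQ A P m n x|).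

End Defs.

(* Main.v *)
Require Import Defs.
From HB Require Import structures.
From mathcomp Require Import all_boot all_order all_algebra.
From mathcomp Require Import all_classical all_reals all_analysis.
From mathcomp Require Import ring lra.
Import Order.TTheory GRing.Theory Num.Theory.
Import numFieldNormedType.Exports.
Local Open Scope ring_scope.

Section Evol.
Context {R : realType} {X : normedModType R}.
Variable A : nat -> {linear X -> X}.
Let A' := fun n => A n : X -> X.

Lemma evol_id m n x : (m <= n)%N -> evol A' m n x = x.
Proof. by case: m => //= m mn; rewrite leqNgt mn. Qed.

Lemma evolS m n x : (n <= m)%N -> evol A' m.+1 n x = A m.+1 (evol A' m n x).
Proof. by move=> nm /=; rewrite nm. Qed.

Lemma evolB m n x y : evol A' m n (x - y) = evol A' m n x - evol A' m n y.
Proof.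
elim: m => //= m IH; case: ifP => // _; by rewrite /A' /= IH linearB.
Qed.

Lemma evol0 m n : evol A' m n 0 = 0.
Proof. by have := evolB m n 0 0; rewrite !subrr. Qed.

Lemma evol_comp m k n x : (n <= k)%N -> (k <= m)%N ->
  evol A' m k (evol A' k n x) = evol A' m n x.
Proof.
move=> nk; elim: m => [|m IH] km.
  by move: km; rewrite leqn0 => /eqP ->; rewrite evol_id.
move: km; rewrite leq_eqVlt => /orP[/eqP <-|]; first by rewrite evol_id.
rewrite ltnS => km; rewrite !evolS ?IH //; exact: leq_trans km.
Qed.

Variable P : nat -> {linear X -> X}.
Let P' := fun n => P n : X -> X.
Hypothesis hcomp : compatible A' P'.

Lemma evol_commP m n x : (1 <= n)%N -> (n <= m)%N ->
  P m (evol A' m n x) = evol A' m n (P n x).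
Proof.
move=> n1; elim: m => [|m IH] nm.
  by move: nm; rewrite leqn0 => /eqP ->; rewrite !evol_id.
move: nm; rewrite leq_eqVlt => /orP[/eqP <-|]; first by rewrite !evol_id.
rewrite ltnS => nm; rewrite !evolS // -IH //.
by have := hcomp _ (leq_trans n1 nm) (evol A' m n x); rewrite /A' /P' => ->.
Qed.

Hypothesis hPproj : forall n x, P n (P n x) = P n x.

Lemma PQ0 n x : P n (compl P' n x) = 0.
Proof. by rewrite /compl linearB /= hPproj subrr. Qed.

Lemma QQ n x : compl P' n (compl P' n x) = compl P' n x.
Proof. by rewrite {1}/compl /P' PQ0 subr0. Qed.

Lemma evolP_P j n x : evolP A' P' j n (P n x) = evolP A' P' j n x.
Proof. by rewrite /evolP /P' hPproj. Qed.

Lemma evolQ_P k n x : evolQ A' P' k n (P n x) = 0.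
Proof. by rewrite /evolQ /compl /P' hPproj subrr evol0. Qed.

Lemma evolP_Q j n x : evolP A' P' j n (compl P' n x) = 0.
Proof. by rewrite /evolP /P' PQ0 evol0. Qed.

Lemma evolQ_Q k n x : evolQ A' P' k n (compl P' n x) = evolQ A' P' k n x.
Proof. by rewrite /evolQ QQ. Qed.

Variables (N al : R).
Hypothesis hU : forall m n : nat, (1 <= n)%N -> (n <= m)%N -> forall x : X,
      expR (al * (m - n)%:R) * (`|evolP A' P' m n x| + `|compl P' n x|)
      <= N * (`|P n x| + `|evolQ A' P' m n x|).

Lemma F1 m n j x : (1 <= n)%N -> (n <= m)%N -> (m <= j)%N ->
  expR (al * (j - m)%:R) * `|evolP A' P' j n x| <= N * `|evolP A' P' m n x|.
Proof.
move=> n1 nm mj; have := @hU j m (leq_trans n1 nm) mj (evolP A' P' m n x).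
have hPy : P m (evol A' m n (P n x)) = evol A' m n (P n x).
  by rewrite evol_commP // hPproj.
by rewrite /evolP /evolQ /compl /P' /= hPy subrr evol0 normr0 addr0 addr0 (evol_comp j m n (P n x) nm mj).
Qed.

Lemma F2 m n k x : (1 <= n)%N -> (n <= k)%N -> (k <= m)%N ->
  expR (al * (m - k)%:R) * `|evolQ A' P' k n x| <= N * `|evolQ A' P' m n x|.
Proof.
move=> n1 nk km; have := @hU m k (leq_trans n1 nk) km (evolQ A' P' k n x).
have hPy : P k (evol A' k n (compl P' n x)) = 0.
  by rewrite evol_commP // PQ0 evol0.
have hQy : compl P' k (evol A' k n (compl P' n x)) = evol A' k n (compl P' n x).
  by rewrite {1}/compl /P' hPy subr0.
by rewrite /evolP /evolQ hQy /P' /= hPy evol0 normr0 add0r add0r (evol_comp m k n _ nk km).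
Qed.
End Evol.

Section Aux.
Context {R : realType}.



Lemma geom_le (q : R) k : 0 <= q -> q < 1 -> \sum_(i < k) q ^+ i <= (1 - q)^-1.
Proof.
move=> q0 q1; have h1 : 0 < 1 - q by rewrite subr_gt0.
rewrite -[X in _ <= X]mulr1 ler_pdivlMl // mulrC.
have -> : (1 - q) = - (q - 1) by rewrite opprB.
rewrite mulrN mulrC -subrX1 opprB lerBlDr lerDl; exact: exprn_ge0.
Qed.

Lemma geom_rev_le (q : R) n m : 0 <= q -> q < 1 ->
  \sum_(n <= k < m.+1) q ^+ (m - k) <= (1 - q)^-1.
Proof.
move=> q0 q1; have h1 : 0 < 1 - q by rewrite subr_gt0.
elim: m => [|m IH].
  case: n => [|n]; last by rewrite big_geq // invr_ge0 ltW.
  rewrite big_nat1 expr0 -[X in X <= _]invr1 lef_pV2 ?posrE // ?ltr01 //.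
  by rewrite lerBlDr lerDl.
case: (leqP n m.+1) => nm; last by rewrite big_geq // invr_ge0 ltW.
rewrite big_nat_recr //= subnn expr0.
have -> : \sum_(n <= k < m.+1) q ^+ (m.+1 - k) = q * \sum_(n <= k < m.+1) q ^+ (m - k).
  rewrite mulr_sumr big_seq_cond [RHS]big_seq_cond; apply: eq_bigr => k.
  by rewrite mem_index_iota andbT => /andP[_ km]; rewrite subSn // exprS.
case: (leqP n m) => nm'; last first.
  by rewrite big_geq // mulr0 add0r -[X in X <= _]invr1 lef_pV2 ?posrE // ?ltr01 // lerBlDr lerDl.
apply: (le_trans (lerD (ler_wpM2l q0 (IH )) (lexx 1))).
rewrite le_eqVlt; apply/orP; left; apply/eqP; field.
by rewrite subr_eq0 eq_sym (lt_eqF q1).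
Qed.

Lemma term_bound (a v c : R) (i : nat) : expR (a * i%:R) * v <= c ->
  expR (a / 2 * i%:R) * v <= c * expR (- (a / 2)) ^+ i.
Proof.
move=> h; rewrite -expRM_natl.
have -> : expR (a / 2 * i%:R) * v = expR (i%:R * - (a / 2)) * (expR (a * i%:R) * v).
  by rewrite mulrA -expRD; congr (expR _ * _); field.
by rewrite mulrC ler_wpM2r // expR_ge0.
Qed.

Lemma series_term (u : nat -> R) m j : (forall i, 0 <= u i) -> (m <= j)%N ->
  ((u j)%:E <= \sum_(m <= i <oo) (u i)%:E)%E.
Proof.
move=> u0 mj; apply: (le_trans _ (nneseries_lim_ge j.+1 _)); last first.
  by move=> *; rewrite lee_fin.
rewrite big_nat_recr //= sumEFin -EFinD lee_fin lerDr sumr_ge0 //.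
Qed.

Lemma series_geom_bound (t : nat -> R) m (K q : R) : (forall j, 0 <= t j) ->
  0 <= K -> 0 <= q -> q < 1 ->
  (forall j, (m <= j)%N -> t j <= K * q ^+ (j - m)) ->
  (\sum_(m <= j <oo) (t j)%:E <= (K * (1 - q)^-1)%:E)%E.
Proof.
move=> t0 K0 q0 q1 ht; have h1 : 0 < 1 - q by rewrite subr_gt0.
apply: lime_le; first by apply: is_cvg_nneseries => *; rewrite lee_fin.
apply: nearW => k; rewrite sumEFin lee_fin.
case: (leqP k m) => km.
  by rewrite big_geq // mulr_ge0 // invr_ge0 ltW.
apply: (le_trans (ler_sum_nat (G := fun j => K * q ^+ (j - m)) _)).
  by move=> i /andP[mi _]; exact: ht.
rewrite -mulr_sumr ler_wpM2l // -{1}(add0n m) big_addn big_mkord.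
under eq_bigr do rewrite addnK.
exact: geom_le.
Qed.

End Aux.

Theorem mainTheorem2 (R : realType) (X : completeNormedModType R)
  (A P : nat -> {linear X -> X})
  (hAc : forall n, continuous (A n))
  (hPc : forall n, continuous (P n))
  (hPproj : forall n x, P n (P n x) = P n x)
  (hcomp : compatible (fun n => A n : X -> X) (fun n => P n : X -> X)) :
  P_ued (fun n => A n : X -> X) (fun n => P n : X -> X) <->
  exists (D d : R), 0 < D /\ 0 < d /\
    forall m n : nat, (1 <= n)%N -> (n <= m)%N -> forall x : X,
      ((\sum_(m <= j <oo)
          (expR (d * (j - m)%:R) * `|evolP (fun k => A k : X -> X) (fun k => P k : X -> X) j n x|)%:E)
       + (\sum_(n <= k < m.+1)
          expR (d * (m - k)%:R) * `|evolQ (fun k => A k : X -> X) (fun k => P k : X -> X) k n x|)%:E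
       <= (D * (`|evolP (fun k => A k : X -> X) (fun k => P k : X -> X) m n x|
               + `|evolQ (fun k => A k : X -> X) (fun k => P k : X -> X) m n x|))%:E)%E.
Proof.
split.
- case=> N [al [N1 [al0 hU]]].
  have N0 : 0 < N by apply: lt_le_trans N1.
  have d0 : 0 < al / 2 by rewrite divr_gt0.
  have q0 : 0 <= expR (- (al / 2)) by exact: expR_ge0.
  have q1 : expR (- (al / 2)) < 1 by rewrite expR_lt1 oppr_lt0.
  exists (N * (1 - expR (- (al / 2)))^-1), (al / 2); split.
    by rewrite mulr_gt0 // invr_gt0 subr_gt0.
  split => // m n n1 nm x.
  rewrite mulrDr EFinD; apply: leeD.
  + rewrite mulrAC; apply: series_geom_bound => //;
      try (by move=> j; rewrite mulr_ge0 // expR_ge0); try (by rewrite mulr_ge0 // ltW).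
    move=> j mj; apply: term_bound; exact: (F1 A P hcomp hPproj N al hU).
  + rewrite lee_fin.
    apply: (le_trans (ler_sum_nat (G := fun k => (N * `|evolQ (fun k => A k : X -> X) (fun k => P k : X -> X) m n x|) * expR (- (al / 2)) ^+ (m - k)) _)).
      move=> k /andP[nk km]; apply: term_bound.
      by apply: (F2 A P hcomp hPproj N al hU) => //.
    rewrite -mulr_sumr mulrAC ler_wpM2r //.
    apply: ler_wpM2l; first exact: ltW.
    exact: geom_rev_le.
- case=> D [d [D0 [d0 H]]].
  exists (Num.max 1 D), d; split; first by rewrite le_max lexx.
  split => // m n n1 nm x.
  have h1 : expR (d * (m - n)%:R) * `|evolP (fun k => A k : X -> X) (fun k => P k : X -> X) m n x| <= D * `|P n x|.
    have := H n n n1 (leqnn n) (P n x).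
    set S := (X in (X + _)%E); set T := (X in (_ + X%:E)%E).
    move=> h.
    have T0 : 0 <= T by apply: sumr_ge0 => k _; rewrite mulr_ge0 // expR_ge0.
    have ug0 : forall i, 0 <= (fun j => expR (d * (j - n)%:R) * `|evolP (fun k => A k : X -> X) (fun k => P k : X -> X) j n (P n x)|) i.
      by move=> i; rewrite mulr_ge0 // expR_ge0.
    have := le_trans (series_term _ n m ug0 nm) (le_trans (leeDl S (T0 : (0 <= T%:E)%E)) h).
    rewrite lee_fin !evolP_P // evolQ_P // normr0 addr0 {2}/evolP evol_id //.
  have h2 : expR (d * (m - n)%:R) * `|compl (fun k => P k : X -> X) n x| <= D * `|evolQ (fun k => A k : X -> X) (fun k => P k : X -> X) m n x|.
    have := H m n n1 nm (compl (fun k => P k : X -> X) n x).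
    set S := (X in (X + _)%E); set T := (X in (_ + X%:E)%E).
    move=> h.
    have S0 : (0 <= S)%E by apply: nneseries_ge0 => *; rewrite lee_fin mulr_ge0 // expR_ge0.
    have := le_trans (leeDr T%:E S0) h.
    rewrite lee_fin /T big_ltn ?ltnS // evolP_Q // evolQ_Q // normr0 add0r.
    rewrite evolQ_Q // /evolQ evol_id //.
    apply: le_trans; rewrite lerDl sumr_ge0 // => k _; rewrite mulr_ge0 // expR_ge0.
  rewrite mulrDr; apply: (le_trans (lerD h1 h2)).
  rewrite -mulrDr ler_wpM2r ?addr_ge0 // le_max lexx orbT //.
Qed.
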